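(* For every composite number $a\in\mathbb N$, there exist at least two distinct integer bases $b,c\ge 2$ such that $a$ is antipalindromic both in base $b$ and in base $c$.
   Context: For an integer $b\ge 2$, every natural number $x$ has a unique base-$b$ expansion $x=a_\ell b^\ell+\dots+a_1b+a_0$ with $a_0,\dots,a_\ell\in\{0,1,\dots,b-1\}$ and $a_\ell\neq 0$. The number $x$ is antipalindromic in base $b$ if $a_j=b-1-a_{\ell-j}$ for all $j\in\{0,1,\dots,\ell\}$. *)

(* Defs.v *)
From mathcomp Require Import all_boot.
Set Implicit Arguments. Unset Strict Implicit. Unset Printing Implicit Defensive.

Definition digit (b x j : nat) : nat := (x %/ b ^ j) %% b.

(* x is antipalindromic in base b: x has base-b expansion
   a_l b^l + ... + a_0 with a_l <> 0 (i.e. b^l <= x < b^(l+1)),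
   and a_j = b - 1 - a_(l-j) for all j in {0,...,l}. *)
Definition antipalindromic (b x : nat) : Prop :=
  exists l : nat,
    [/\ b ^ l <= x, x < b ^ l.+1 &
        forall j, j <= l -> digit b x j = b - 1 - digit b x (l - j)].

(* Main.v *)
Require Import Defs.
From mathcomp Require Import all_boot.
From mathcomp Require Import zify.

Lemma one_digit a : 1 <= a -> antipalindromic (a.*2.+1) a.
Proof.
move=> ha; exists 0; split.
- by rewrite expn0.
- by rewrite expn1; lia.
- move=> j; rewrite leqn0 => /eqP ->; rewrite /digit expn0 divn1 modn_small; lia.
Qed.

Lemma two_digit m n : 2 <= m -> m <= n -> antipalindromic n.+1 (m * n).
Proof.
move=> hm hmn.
have E : m * n = (m - 1) * n.+1 + (n - m + 1) by nia.
have hr : n - m + 1 < n.+1 by lia.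
have d0 : digit n.+1 (m * n) 0 = n - m + 1.
  by rewrite /digit expn0 divn1 E modnMDl modn_small.
have d1 : digit n.+1 (m * n) 1 = m - 1.
  rewrite /digit expn1 E divnMDl // (divn_small hr) addn0 modn_small //; lia.
exists 1; split.
- rewrite expn1; nia.
- rewrite expnS expn1; nia.
- move=> j; case: j => [|[|j]] // _.
  + rewrite subn0 d0 d1; lia.
  + rewrite subnn d0 d1; lia.
Qed.

Theorem mainTheorem13 (a : nat) :
  1 < a -> ~~ prime a ->
  exists b c : nat,
    [/\ 2 <= b, 2 <= c, b != c, antipalindromic b a & antipalindromic c a].
Proof.
move=> ha /primePn [|[d /andP [hd1 hda] hdvd]]; first by lia.
have Ea : a = d * (a %/ d) by rewrite mulnC divnK.
have hq : 2 <= a %/ d by move: Ea hda hd1; set q := a %/ d; nia.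
case: (leqP d (a %/ d)) => hle.
- exists (a %/ d).+1, a.*2.+1; split; try lia.
  + rewrite eqn_leq negb_and; apply/orP; right; move: Ea hd1 hda; set q := a %/ d; nia.
  + by rewrite {2}Ea; apply: two_digit.
  + by apply: one_digit; lia.
- exists d.+1, a.*2.+1; split; try lia.
  + by rewrite {1}Ea mulnC; apply: two_digit => //; lia.
  + by apply: one_digit; lia.
Qed.
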